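(* Let $p\ge 0$. Then for all $r\in(0,1)$, $$2^{1+p}K(1/2)\,(r-r^2)^p\le (1-r)^pK(1-r)+r^pK(r).$$
   Context: $K(x)={\cal K}(\sqrt x)=\frac\pi2\,{}_2F_1(1/2,1/2;1;x)$ for $x\in[0,1)$, where ${\cal K}(r)=\int_0^{\pi/2}(1-r^2\sin^2t)^{-1/2}dt$ is the complete elliptic integral of the first kind. *)

(* Defs.v *)
From Stdlib Require Import Reals.
From Coquelicot Require Import Coquelicot.
Open Scope R_scope.

Definition calK (r : R) : R :=
  RInt (fun t => / sqrt (1 - r ^ 2 * (sin t) ^ 2)) 0 (PI / 2).

Definition K (x : R) : R := calK (sqrt x).

(* Main.v *)
Require Import Defs.
From Stdlib Require Import Reals Lra Psatz.
From Coquelicot Require Import Coquelicot.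
Open Scope R_scope.

Definition fI (x t : R) : R := / sqrt (1 - x * sin t ^ 2).

Lemma sin2_bnd (t : R) : 0 <= sin t ^ 2 <= 1.
Proof. pose proof (SIN_bound t). nra. Qed.

Lemma fI_pos (x t : R) : 0 <= x < 1 -> 0 < fI x t.
Proof.
  intros Hx. unfold fI. pose proof (sin2_bnd t).
  apply Rinv_0_lt_compat, sqrt_lt_R0. nra.
Qed.

Lemma fI_mono (x y t : R) : 0 <= x -> x <= y -> y < 1 -> fI x t <= fI y t.
Proof.
  intros H1 H2 H3. unfold fI. pose proof (sin2_bnd t).
  apply Rinv_le_contravar. apply sqrt_lt_R0. nra.
  apply sqrt_le_1_alt. nra.
Qed.

Lemma fI_conv (r t : R) : 0 < r < 1 ->
  2 * fI (1/2) t <= fI r t + fI (1 - r) t.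
Proof.
  intros Hr. unfold fI. pose proof (sin2_bnd t). set (a := sin t ^ 2) in *.
  assert (h1 : 0 < 1 - r * a) by nra.
  assert (h2 : 0 < 1 - (1 - r) * a) by nra.
  assert (h3 : 0 < 1 - 1/2 * a) by nra.
  pose proof (sqrt_lt_R0 _ h1). pose proof (sqrt_lt_R0 _ h2). pose proof (sqrt_lt_R0 _ h3).
  pose proof (sqrt_sqrt _ (Rlt_le _ _ h1)). pose proof (sqrt_sqrt _ (Rlt_le _ _ h2)).
  pose proof (sqrt_sqrt _ (Rlt_le _ _ h3)).
  set (p1 := sqrt (1 - r * a)) in *. set (p2 := sqrt (1 - (1 - r) * a)) in *.
  set (q := sqrt (1 - 1/2 * a)) in *.
  assert (hq2 : q * q = (p1 * p1 + p2 * p2) / 2) by lra.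
  assert (hq : (p1 + p2) / 2 <= q).
  { destruct (Rle_lt_dec ((p1 + p2) / 2) q) as [h|h]; [exact h|].
    exfalso. assert (q * q < ((p1 + p2) / 2) * ((p1 + p2) / 2)).
    { apply Rmult_le_0_lt_compat; lra. }
    assert (0 <= (p1 - p2) * (p1 - p2)) by (apply Rle_0_sqr).
    nra. }
  assert (0 <= (p1 - p2) * (p1 - p2)) by (apply Rle_0_sqr).
  assert (2 * p1 * p2 <= q * (p1 + p2)) by nra.
  apply (Rmult_le_reg_r (p1 * p2 * q)). { repeat apply Rmult_lt_0_compat; lra. }
  replace ((/ p1 + / p2) * (p1 * p2 * q)) with (q * (p1 + p2)) by (field; lra).
  replace (2 * / q * (p1 * p2 * q)) with (2 * p1 * p2) by (field; lra).
  lra.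
Qed.

Lemma fI_int (x : R) : 0 <= x < 1 -> ex_RInt (fI x) 0 (PI / 2).
Proof.
  intros Hx. apply (@ex_RInt_continuous R_CompleteNormedModule). intros z _.
  apply (@ex_derive_continuous R_AbsRing R_NormedModule). unfold fI.
  pose proof (sin2_bnd z).
  assert (0 < 1 - x * sin z ^ 2) by nra.
  auto_derive. split. lra. split; auto.
  apply Rgt_not_eq, sqrt_lt_R0; lra.
Qed.

Lemma K_eq (x : R) : 0 <= x -> K x = RInt (fI x) 0 (PI / 2).
Proof. intros H. unfold K, calK, fI. rewrite pow2_sqrt; auto. Qed.

Lemma Rpower_gt0 (a b : R) : 0 < Rpower a b.
Proof. unfold Rpower. apply exp_pos. Qed.

Lemma RI_comb (f g h : R -> R) a b c1 c2 c3 : a <= b ->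
  ex_RInt f a b -> ex_RInt g a b -> ex_RInt h a b ->
  (forall t, a < t < b -> c3 * h t <= c1 * f t + c2 * g t) ->
  c3 * RInt h a b <= c1 * RInt f a b + c2 * RInt g a b.
Proof.
  intros Hab If Ig Ih H.
  assert (E3 : c3 * RInt h a b = RInt (fun t => c3 * h t) a b).
  { symmetry. exact (@RInt_scal R_CompleteNormedModule h a b c3 Ih). }
  assert (E1 : c1 * RInt f a b = RInt (fun t => c1 * f t) a b).
  { symmetry. exact (@RInt_scal R_CompleteNormedModule f a b c1 If). }
  assert (E2 : c2 * RInt g a b = RInt (fun t => c2 * g t) a b).
  { symmetry. exact (@RInt_scal R_CompleteNormedModule g a b c2 Ig). }
  assert (I1 : ex_RInt (fun t => c1 * f t) a b) by exact (@ex_RInt_scal R_CompleteNormedModule f a b c1 If).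
  assert (I2 : ex_RInt (fun t => c2 * g t) a b) by exact (@ex_RInt_scal R_CompleteNormedModule g a b c2 Ig).
  assert (I3 : ex_RInt (fun t => c3 * h t) a b) by exact (@ex_RInt_scal R_CompleteNormedModule h a b c3 Ih).
  assert (E4 : RInt (fun t => c1 * f t) a b + RInt (fun t => c2 * g t) a b
     = RInt (fun t => c1 * f t + c2 * g t) a b).
  { symmetry. exact (@RInt_plus R_CompleteNormedModule _ _ a b I1 I2). }
  rewrite E1, E2, E3, E4.
  apply RInt_le; auto.
  exact (@ex_RInt_plus R_CompleteNormedModule _ _ a b I1 I2).
Qed.

Theorem mainTheorem14 (p : R) (hp : 0 <= p) (r : R) (hr : 0 < r < 1) :
  Rpower 2 (1 + p) * K (1 / 2) * Rpower (r - r ^ 2) p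
  <= Rpower (1 - r) p * K (1 - r) + Rpower r p * K r.
Proof.
  set (s := 1 - r).
  set (u := Rpower s p). set (v := Rpower r p). set (e := Rpower 2 p).
  assert (hu : 0 < u) by apply Rpower_gt0.
  assert (hv : 0 < v) by apply Rpower_gt0.
  assert (he : 0 < e) by apply Rpower_gt0.
  assert (E1 : Rpower 2 (1 + p) = 2 * e).
  { unfold e. rewrite Rpower_plus, Rpower_1; lra. }
  assert (E2 : Rpower (r - r ^ 2) p = v * u).
  { unfold u, v, s. rewrite Rpower_mult_distr; try lra. f_equal; ring. }
  assert (Heuv : e * e * (u * v) <= 1).
  { unfold e, u, v. rewrite !Rpower_mult_distr; try (unfold s; nra).
    apply Rle_trans with (Rpower 1 p).
    - apply Rle_Rpower_l; auto. split; [repeat apply Rmult_lt_0_compat; unfold s; lra|]. assert (0 <= (r - s) * (r - s)) by apply Rle_0_sqr. unfold s in *; lra.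
    - unfold Rpower. rewrite ln_1, Rmult_0_r, exp_0. lra. }
  assert (Huv : 2 * e * (u * v) <= u + v).
  { assert (0 <= (u - v) * (u - v)) by apply Rle_0_sqr.
    assert (0 < u * v) by nra.
    destruct (Rle_lt_dec (2 * e * (u * v)) (u + v)) as [h|h]; [exact h|].
    exfalso. assert ((u+v)*(u+v) < (2 * e * (u * v)) * (2 * e * (u * v))).
    { apply Rmult_le_0_lt_compat; lra. }
    nra. }
  assert (Hord : 0 <= (u - v) * (fI s 0 - fI r 0) \/ True) by auto. clear Hord.
  assert (Hpt : forall t, 2 * e * (v * u) * fI (1/2) t <= u * fI s t + v * fI r t).
  { intros t.
    pose proof (fI_conv r t hr). fold s in H.
    pose proof (fI_pos (1/2) t ltac:(lra)).
    assert (0 <= (u - v) * (fI s t - fI r t)).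
    { destruct (Rle_lt_dec r s).
      - assert (v <= u) by (apply Rle_Rpower_l; unfold s in *; lra).
        assert (fI r t <= fI s t) by (apply fI_mono; unfold s in *; lra). nra.
      - assert (u <= v) by (apply Rle_Rpower_l; unfold s in *; lra).
        assert (fI s t <= fI r t) by (apply fI_mono; unfold s in *; lra). nra. }
    nra. }
  rewrite E1, E2, !K_eq; try (unfold s; lra).
  assert (Is : ex_RInt (fI s) 0 (PI/2)) by (apply fI_int; unfold s; lra).
  assert (Ir : ex_RInt (fI r) 0 (PI/2)) by (apply fI_int; lra).
  assert (Ih : ex_RInt (fI (1/2)) 0 (PI/2)) by (apply fI_int; lra).
  replace (2 * e * RInt (fI (1 / 2)) 0 (PI / 2) * (v * u))
    with ((2 * e * (v * u)) * RInt (fI (1 / 2)) 0 (PI / 2)) by ring.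
  apply RI_comb; auto.
  - pose proof PI_RGT_0; lra.
Qed.
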